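(* Let $x<w$ in $W$ and let $\mathfrak w=s_1\cdots s_n$ be a reduced word of $w$ which is a good word for $x$, with $\lambda_{x,\mathfrak w}=(i_1,\ldots,i_d)$ and $i_1>1$. Then: (i) $x\not\le s_1w$; (ii) $S(s_1x,s_1w)=S(x,w)$; (iii) the reduced word $s_1\mathfrak w:=s_2\cdots s_n$ of $s_1w$ is a good word for $s_1x$, and $\lambda_{s_1x,s_1\mathfrak w}=(i_1-1,\ldots,i_d-1)$ (positions in $s_2\cdots s_n$ being numbered $1,\ldots,n-1$).
   Context: Let $W$ be the Weyl group of a finite reduced root system $\Phi$ with positive roots $\Phi_+$ and simple reflections $S$; $\ell$ is the length and $\le$ the Bruhat order. For $x\le w$ put $S(x,w)=\{\alpha\in\Phi_+ : x\le ws_\alpha<w\}$. For a reduced word $\mathfrak w=s_1\cdots s_n$ of $w$ ($s_i\in S$), let $\lambda_{x,\mathfrak w}$ be the set of $i\in\{1,\ldots,n\}$ such that $x\le s_1\cdots\widehat{s_i}\cdots s_n$ (the Weyl group element obtained by omitting $s_i$), written as the increasing tuple $(i_1,\ldots,i_d)$, $i_1<\cdots<i_d$. The word $\mathfrak w$ is called a good word for $x$ if $x=s_1\cdots\widehat{s_{i_1}}\cdots\widehat{s_{i_d}}\cdots s_n$ (omitting exactly the positions in $\lambda_{x,\mathfrak w}$). *)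

(* Defs.v *)
(* Weyl group of a finite reduced (crystallographic) root system,
   realized concretely as a group of matrices over an ordered field R. *)
From HB Require Import structures.
From mathcomp Require Import all_boot all_order all_algebra.
From Stdlib Require Import Relations.Relation_Operators.
Set Implicit Arguments. Unset Strict Implicit. Unset Printing Implicit Defensive.
Import Order.TTheory GRing.Theory Num.Theory.
Local Open Scope ring_scope.

Section WeylGroup.
Variables (R : realFieldType) (n : nat).

Definition dotv (u v : 'rV[R]_n) : R := (u *m v^T) 0 0.

(* the orthogonal reflection s_a (acting on column vectors M *m v;
   it is a symmetric matrix, so also v *m s_a on row vectors) *)
Definition refl (a : 'rV[R]_n) : 'M[R]_n :=
  1%:M - (2 / dotv a a) *: (a^T *m a).

Definition is_root_system (Phi : seq 'rV[R]_n) : Prop :=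
  [/\ 0 \notin Phi,
      (forall a b, a \in Phi -> b \in Phi -> b *m refl a \in Phi),
      (forall a b, a \in Phi -> b \in Phi ->
         exists z : int, 2 * dotv b a / dotv a a = z%:~R) &
      (forall a (c : R), a \in Phi -> c *: a \in Phi -> c = 1 \/ c = -1)].

Variables (Phi : seq 'rV[R]_n) (rho : 'rV[R]_n).

(* rho is regular: defines the positive system Phi_+ = {a in Phi | (a,rho) > 0} *)
Definition regular : Prop := forall a, a \in Phi -> dotv a rho != 0.

Definition pos_root (a : 'rV[R]_n) : Prop := a \in Phi /\ 0 < dotv a rho.

Definition simple_root (a : 'rV[R]_n) : Prop :=
  pos_root a /\ ~ (exists b c, pos_root b /\ pos_root c /\ a = b + c).

(* words in the simple reflections: a word is a list of simple roots *)
Definition simple_word (ws : seq 'rV[R]_n) : Prop :=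
  forall a, a \in ws -> simple_root a.

Definition wordval (ws : seq 'rV[R]_n) : 'M[R]_n :=
  foldr (fun a M => refl a *m M) 1%:M ws.

Definition inW (M : 'M[R]_n) : Prop :=
  exists ws, simple_word ws /\ wordval ws = M.

Definition length_is (M : 'M[R]_n) (k : nat) : Prop :=
  (exists ws, simple_word ws /\ wordval ws = M /\ size ws = k) /\
  (forall ws, simple_word ws -> wordval ws = M -> (k <= size ws)%N).

Definition reduced_word (ws : seq 'rV[R]_n) : Prop :=
  simple_word ws /\
  forall ws', simple_word ws' -> wordval ws' = wordval ws -> (size ws <= size ws')%N.

Definition bruhat_step (x y : 'M[R]_n) : Prop :=
  exists a, a \in Phi /\ y = x *m refl a /\
    exists kx ky, length_is x kx /\ length_is y ky /\ (kx < ky)%N.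

Definition bruhat_le (x y : 'M[R]_n) : Prop :=
  inW x /\ clos_refl_trans _ bruhat_step x y.

Definition bruhat_lt (x y : 'M[R]_n) : Prop := bruhat_le x y /\ x <> y.

Definition Sxw (x w : 'M[R]_n) (a : 'rV[R]_n) : Prop :=
  pos_root a /\ bruhat_le x (w *m refl a) /\ bruhat_lt (w *m refl a) w.

(* the word with position i (1-based) omitted *)
Definition omit1 (i : nat) (ws : seq 'rV[R]_n) : seq 'rV[R]_n :=
  take i.-1 ws ++ drop i ws.

(* the word with all positions (1-based) in l omitted *)
Definition omit_pos (l : seq nat) (ws : seq 'rV[R]_n) : seq 'rV[R]_n :=
  mask [seq (i.+1 \notin l) | i <- iota 0 (size ws)] ws.

(* l is lambda_{x,ws}, written as an increasing tuple *)
Definition is_lambda (x : 'M[R]_n) (ws : seq 'rV[R]_n) (l : seq nat) : Prop :=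
  sorted ltn l /\
  forall i, i \in l <-> ((1 <= i <= size ws)%N /\ bruhat_le x (wordval (omit1 i ws))).

Definition good_word (x : 'M[R]_n) (ws : seq 'rV[R]_n) : Prop :=
  exists l, is_lambda x ws l /\ x = wordval (omit_pos l ws).

End WeylGroup.

(* Main.v *)
Require Import Defs.
From HB Require Import structures.
From mathcomp Require Import all_boot all_order all_algebra.
From Stdlib Require Import Classical ClassicalEpsilon Lia Relations.
From mathcomp Require Import zify ring lra.
Import Order.TTheory GRing.Theory Num.Theory.
Local Open Scope ring_scope.
Set Implicit Arguments. Unset Strict Implicit. Unset Printing Implicit Defensive.

Section Basics.
Variables (R : realFieldType) (n : nat).
Implicit Types (u v a b : 'rV[R]_n) (M N g : 'M[R]_n).

Lemma dotvC u v : dotv u v = dotv v u.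
Proof. rewrite /dotv !mxE; apply: eq_bigr => j _; by rewrite !mxE mulrC. Qed.

Lemma dotvDl u v b : dotv (u + v) b = dotv u b + dotv v b.
Proof. by rewrite /dotv mulmxDl mxE. Qed.

Lemma dotvZl c u b : dotv (c *: u) b = c * dotv u b.
Proof. by rewrite /dotv -scalemxAl mxE. Qed.

Lemma dotvNl u b : dotv (- u) b = - dotv u b.
Proof. by rewrite /dotv mulNmx mxE. Qed.

Lemma dotvBl u v b : dotv (u - v) b = dotv u b - dotv v b.
Proof. by rewrite dotvDl dotvNl. Qed.

Lemma dotv_sum (s : seq 'rV[R]_n) b : dotv (\sum_(c <- s) c) b = \sum_(c <- s) dotv c b.
Proof.
elim: s => [|c s IH]; first by rewrite !big_nil /dotv mul0mx mxE.
by rewrite !big_cons dotvDl IH.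
Qed.

Lemma dotv_ge0 u : 0 <= dotv u u.
Proof.
rewrite /dotv mxE; apply: sumr_ge0 => j _; rewrite mxE; exact: sqr_ge0.
Qed.

Lemma dotv_eq0 u : (dotv u u == 0) = (u == 0).
Proof.
apply/idP/idP; last by move/eqP->; rewrite /dotv mul0mx mxE.
rewrite /dotv mxE psumr_eq0 => [H|j _]; last by rewrite mxE sqr_ge0.
apply/eqP/rowP => j; rewrite mxE.
have := allP H j (mem_index_enum _); rewrite /= mxE -expr2 sqrf_eq0.
by move/eqP.
Qed.

Lemma mulmx_row_dot u v : u *m v^T = (dotv u v)%:M.
Proof. by rewrite {1}[u *m v^T]mx11_scalar. Qed.

Lemma refl_row b a : b *m refl a = b - (2 * dotv b a / dotv a a) *: a.
Proof.
rewrite /refl mulmxBr mulmx1 -scalemxAr mulmxA mulmx_row_dot mul_scalar_mx.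
by rewrite scalerA mulrAC.
Qed.

Lemma mx_ext_row M N : (forall b : 'rV[R]_n, b *m M = b *m N) -> M = N.
Proof.
move=> H; apply/row_matrixP => i.
by rewrite -(mul1mx M) -(mul1mx N) !row_mul H.
Qed.

Lemma refl_tr a : (refl a)^T = refl a.
Proof.
by rewrite /refl linearB /= trmx1 linearZ /= trmx_mul trmxK.
Qed.

Lemma refl_self a : a != 0 -> a *m refl a = - a.
Proof.
move=> a0; rewrite refl_row mulfK ?dotv_eq0 // scaler_nat mulr2n.
by rewrite opprD addrA subrr add0r.
Qed.

Lemma dotv_mulmx u v M : dotv (u *m M) v = dotv u (v *m M^T).
Proof. by rewrite /dotv trmx_mul trmxK mulmxA. Qed.

Lemma dotv_refl_self b a : a != 0 -> dotv (b *m refl a) a = - dotv b a.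
Proof.
by move=> a0; rewrite dotv_mulmx refl_tr refl_self // dotvC dotvNl dotvC.
Qed.

Lemma refl_invol a : a != 0 -> refl a *m refl a = 1%:M.
Proof.
move=> a0; apply: mx_ext_row => b; rewrite mulmx1 mulmxA [X in X = _]refl_row.
rewrite dotv_refl_self // refl_row mulrN mulNr scaleNr opprK.
by rewrite subrK.
Qed.

Lemma reflN a : refl (- a) = refl a.
Proof.
apply: mx_ext_row => b; rewrite !refl_row.
rewrite [dotv b (-a)]dotvC !dotvNl [dotv a (-a)]dotvC dotvNl opprK.
rewrite mulrN mulNr scaleNr scalerN opprK. by rewrite dotvC.
Qed.

Definition orth g := g *m g^T = 1%:M /\ g^T *m g = 1%:M.

Lemma orth1 : orth 1%:M.
Proof. by rewrite /orth trmx1 mulmx1. Qed.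

Lemma orth_refl a : a != 0 -> orth (refl a).
Proof. by move=> a0; rewrite /orth refl_tr refl_invol. Qed.

Lemma orthM g h : orth g -> orth h -> orth (g *m h).
Proof.
move=> [g1 g2] [h1 h2]; split; rewrite trmx_mul.
  by rewrite mulmxA -(mulmxA g) h1 mulmx1 g1.
by rewrite mulmxA -(mulmxA _ g^T) g2 mulmx1 h2.
Qed.

Lemma orthT g : orth g -> orth g^T.
Proof. by move=> [g1 g2]; rewrite /orth trmxK. Qed.

Lemma dotv_orth u v g : orth g -> dotv (u *m g) (v *m g) = dotv u v.
Proof. by move=> [g1 _]; rewrite /dotv trmx_mul mulmxA -(mulmxA u) g1 mulmx1. Qed.

Lemma refl_conj b g : orth g -> refl (b *m g) = g^T *m refl b *m g.
Proof.
move=> og; have [g1 g2] := og.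
rewrite /refl dotv_orth // mulmxBr mulmx1 mulmxBl g2 -scalemxAr -scalemxAl.
by rewrite trmx_mul !mulmxA.
Qed.

End Basics.

Lemma min_ex (P : nat -> Prop) : (exists k, P k) -> exists k, P k /\ forall m, P m -> (k <= m)%N.
Proof.
move=> [k Pk]; elim: k {-2}k (leqnn k) Pk => [|N IH] k kN Pk.
  by exists k; split => // m _; move: kN; rewrite leqn0 => /eqP->.
have [[m [Pm mk]]|H] := classic (exists m, P m /\ (m < k)%N).
  by apply: (IH m) => //; move: mk kN; lia.
exists k; split => // m Pm; rewrite leqNgt; apply/negP => mk; apply: H.
by exists m.
Qed.

Section Main.
Variables (R : realFieldType) (n : nat) (Phi : seq 'rV[R]_n) (rho : 'rV[R]_n).
Hypothesis hPhi : is_root_system Phi.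
Hypothesis hrho : regular Phi rho.
Implicit Types (u v a b c : 'rV[R]_n) (M N g h : 'M[R]_n).
Implicit Types (ws s t L : seq 'rV[R]_n).

Notation pos := (pos_root Phi rho).
Notation simple := (simple_root Phi rho).
Notation sword := (simple_word Phi rho).

Lemma root_neq0 a : a \in Phi -> a != 0.
Proof. by case: hPhi => H _ _ _ aP; apply: contraNneq H => <-. Qed.

Lemma root_refl a b : a \in Phi -> b \in Phi -> b *m refl a \in Phi.
Proof. by case: hPhi => _ H _ _; apply: H. Qed.

Lemma rootN a : a \in Phi -> - a \in Phi.
Proof. by move=> aP; rewrite -refl_self ?root_neq0 // root_refl. Qed.

Lemma root_rho a : a \in Phi -> dotv a rho != 0.
Proof. exact: hrho. Qed.

Lemma root_sign a : a \in Phi -> pos_root Phi rho a \/ pos_root Phi rho (- a).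
Proof.
move=> aP; rewrite /pos_root dotvNl oppr_gt0 rootN //.
by have := root_rho aP; rewrite neq_lt => /orP[H|H]; [right|left]; split.
Qed.

Lemma pos_rootN a : pos_root Phi rho a -> ~ pos_root Phi rho (- a).
Proof. by move=> [_ H] [_]; rewrite dotvNl oppr_gt0 ltNge (ltW H). Qed.

Lemma simple_pos a : simple_root Phi rho a -> pos_root Phi rho a.
Proof. by case. Qed.

Lemma simple_in a : simple_root Phi rho a -> a \in Phi.
Proof. by case=> [[]]. Qed.

Lemma simple_word_cons a ws :
  simple_word Phi rho (a :: ws) <-> simple_root Phi rho a /\ simple_word Phi rho ws.
Proof.
split; first by move=> H; split=> [|c cP]; apply: H; rewrite inE ?eqxx ?cP ?orbT.
by move=> [Ha Hw] c; rewrite inE => /orP[/eqP->|/Hw].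
Qed.

Lemma simple_word_nil : simple_word Phi rho [::].
Proof. by []. Qed.

Lemma simple_word_cat s t :
  simple_word Phi rho s -> simple_word Phi rho t -> simple_word Phi rho (s ++ t).
Proof. by move=> Hs Ht c; rewrite mem_cat => /orP[/Hs|/Ht]. Qed.

Lemma simple_word_sub s t :
  subseq s t -> simple_word Phi rho t -> simple_word Phi rho s.
Proof. by move=> /mem_subseq st Ht c /st /Ht. Qed.

Lemma simple_word_rev s : simple_word Phi rho s -> simple_word Phi rho (rev s).
Proof. by move=> Hs c; rewrite mem_rev => /Hs. Qed.

Lemma wordval_cons a ws : wordval (a :: ws) = refl a *m wordval ws.
Proof. by []. Qed.

Lemma wordval_cat s t : wordval (s ++ t) = wordval s *m wordval t.
Proof. by elim: s => [|a s IH] /=; rewrite ?mul1mx // IH mulmxA. Qed.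

Lemma wordval_rev s : wordval (rev s) = (wordval s)^T.
Proof.
elim: s => [|a s IH] /=; first by rewrite trmx1.
by rewrite rev_cons -cats1 wordval_cat IH /= mulmx1 trmx_mul refl_tr.
Qed.

Lemma word_orth ws : simple_word Phi rho ws -> orth (wordval ws).
Proof.
elim: ws => [|a ws IH] /=; first by move=> _; exact: orth1.
move=> /simple_word_cons [Ha Hw]; apply: orthM (IH Hw).
by apply: orth_refl; apply: root_neq0; apply: simple_in.
Qed.

Lemma word_root ws b : simple_word Phi rho ws -> b \in Phi -> b *m wordval ws \in Phi.
Proof.
elim: ws b => [|a ws IH] b /=; first by rewrite mulmx1.
move=> /simple_word_cons [Ha Hw] bP; rewrite mulmxA; apply: IH => //.
by apply: root_refl => //; apply: simple_in.
Qed.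

Lemma inW_orth g : inW Phi rho g -> orth g.
Proof. by move=> [ws [Hw <-]]; exact: word_orth. Qed.

Lemma inW_root g b : inW Phi rho g -> b \in Phi -> b *m g \in Phi.
Proof. by move=> [ws [Hw <-]]; exact: word_root. Qed.

Lemma inW1 : inW Phi rho 1%:M.
Proof. by exists [::]. Qed.

Lemma inWM g h : inW Phi rho g -> inW Phi rho h -> inW Phi rho (g *m h).
Proof.
move=> [s [Hs <-]] [t [Ht <-]]; exists (s ++ t); split; last exact: wordval_cat.
exact: simple_word_cat.
Qed.

Lemma inWT g : inW Phi rho g -> inW Phi rho g^T.
Proof.
move=> [s [Hs <-]]; exists (rev s); split; last exact: wordval_rev.
exact: simple_word_rev.
Qed.

Lemma inW_simple a : simple_root Phi rho a -> inW Phi rho (refl a).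
Proof.
move=> Ha; exists [:: a]; split; last by rewrite /= mulmx1.
by apply/simple_word_cons; split.
Qed.

Lemma refl_root_invol a : a \in Phi -> refl a *m refl a = 1%:M.
Proof. by move=> aP; apply: refl_invol; apply: root_neq0. Qed.

Lemma count_lt (p q : pred 'rV[R]_n) (s : seq 'rV[R]_n) x :
  (forall y, p y -> q y) -> x \in s -> q x -> ~~ p x -> (count p s < count q s)%N.
Proof.
move=> pq; elim: s => [|y s IH] //=; rewrite inE => /orP[/eqP<- qx px|xs qx px].
  rewrite qx (negbTE px) add0n add1n ltnS.
  by apply: sub_count => z; apply: pq.
have := IH xs qx px; move: (pq y); case: (p y); case: (q y) => //= H; try by have := H isT. all: lia.
Qed.

Definition below_cnt b := count (fun c => dotv c rho < dotv b rho) Phi.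

Lemma below_cnt_lt b c : c \in Phi -> dotv c rho < dotv b rho ->
  (below_cnt c < below_cnt b)%N.
Proof.
move=> cP cb; apply: (count_lt (x := c)) => //; last by rewrite ltxx.
by move=> y /= yc; apply: lt_trans yc cb.
Qed.

Lemma not_simple_dec b : pos b -> ~ simple b ->
  exists c d, pos c /\ pos d /\ b = c + d.
Proof.
move=> pb ns; apply: NNPP => H; apply: ns; split => //.
Qed.

Lemma pos_sum b : pos b -> exists L, sword L /\ L != [::] /\ b = \sum_(c <- L) c.
Proof.
have [k Hk] : exists k, (below_cnt b < k)%N by exists (below_cnt b).+1.
elim: k b Hk => // k IH b Hk pb.
have [sb|ns] := classic (simple b).
  exists [:: b]; split; first by apply/simple_word_cons; split.
  by rewrite big_cons big_nil addr0.
have [c [d [pc [pd Eb]]]] := not_simple_dec pb ns; subst b.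
have ltc : dotv c rho < dotv (c + d) rho by rewrite dotvDl ltrDl; case: pd.
have ltd : dotv d rho < dotv (c + d) rho by rewrite dotvDl ltrDr; case: pc.
have [Lc [Sc [_ Ec]]] := IH c (leq_trans (below_cnt_lt (proj1 pc) ltc) Hk) pc.
have [Ld [Sd [Nd Ed]]] := IH d (leq_trans (below_cnt_lt (proj1 pd) ltd) Hk) pd.
exists (Lc ++ Ld); split; first exact: simple_word_cat.
split; first by case: (Lc) Nd.
by rewrite big_cat -Ec -Ed.
Qed.

Lemma dotv_expand x y u w :
  dotv (x *: u - y *: w) (x *: u - y *: w) =
  x ^+ 2 * dotv u u - 2 * x * y * dotv u w + y ^+ 2 * dotv w w.
Proof.
rewrite !dotvBl ![dotv _ (_ - _)]dotvC !dotvBl !dotvZl ![dotv _ (_ *: _)]dotvC !dotvZl.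
rewrite [dotv w u]dotvC; ring.
Qed.

Lemma dotv_pos a : a \in Phi -> 0 < dotv a a.
Proof. by move=> aP; rewrite lt_def dotv_eq0 (root_neq0) ?dotv_ge0. Qed.

Lemma strict_cs a c : pos a -> pos c -> a != c ->
  dotv a c ^+ 2 < dotv a a * dotv c c.
Proof.
move=> pa pc ac; rewrite ltNge; apply/negP => H.
have aa0 := dotv_pos (proj1 pa); have cc0 := dotv_pos (proj1 pc).
set v := dotv c c *: a - dotv a c *: c.
have vv : dotv v v = dotv c c * (dotv c c * dotv a a - dotv a c ^+ 2).
  rewrite /v dotv_expand; ring.
have : dotv v v <= 0 by rewrite vv; nra.
rewrite le_eqVlt ltNge dotv_ge0 orbF dotv_eq0 subr_eq0 => /eqP E.
have Ea : a = (dotv a c / dotv c c) *: c.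
  by rewrite mulrC -scalerA -E scalerA mulVf ?scale1r // gt_eqF.
have : (dotv a c / dotv c c) *: c \in Phi by rewrite -Ea; case: pa.
case: hPhi => _ _ _ Hred /(Hred _ _ (proj1 pc)) [] Ec; rewrite Ec in Ea.
  by move: ac; rewrite Ea scale1r eqxx.
by apply: (pos_rootN pc); rewrite -scaleN1r -Ea.
Qed.

Lemma cartan1_false a c : simple a -> simple c -> a != c ->
  a *m refl c = a - c -> False.
Proof.
move=> sa sc ac E.
have acP : a - c \in Phi by rewrite -E (root_refl) ?(simple_in sa) ?(simple_in sc).
case: (root_sign acP) => H.
  by case: sa => _; apply; exists (a - c), c; split => //; split; [case: sc|rewrite subrK].
case: sc => _; apply; exists (- (a - c)), a; split => //; split; first by case: sa.
by rewrite opprB subrK.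
Qed.

Lemma simple_dot a c : simple a -> simple c -> a != c -> dotv a c <= 0.
Proof.
move=> sa sc ac; rewrite leNgt; apply/negP => H.
have pa := simple_pos sa; have pc := simple_pos sc.
have aa0 := dotv_pos (proj1 pa); have cc0 := dotv_pos (proj1 pc).
case: hPhi => _ _ Hint _.
have [z1 Hz1] := Hint c a (proj1 pc) (proj1 pa).
have [z2 Hz2] := Hint a c (proj1 pa) (proj1 pc).
have z1p : (0 < z1)%R.
  by rewrite -(ltr0z R) -Hz1 divr_gt0 // mulr_gt0.
have z2p : (0 < z2)%R.
  by rewrite -(ltr0z R) -Hz2 divr_gt0 // mulr_gt0 // dotvC.
have cs := strict_cs pa pc ac.
have prod : (z1 * z2 < 4)%R.
  rewrite -(ltr_int R) intrM -Hz1 -Hz2 [dotv c a]dotvC.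
  have -> : 2 * dotv a c / dotv c c * (2 * dotv a c / dotv a a) =
            4 * (dotv a c ^+ 2 / (dotv a a * dotv c c)).
    by field; rewrite ?gt_eqF.
  by rewrite -[X in _ < X]mulr1 ltr_pM2l // ltr_pdivrMr ?mul1r // mulr_gt0.
have [e1|e2] : z1 = 1%R \/ z2 = 1%R by lia.
  apply: (cartan1_false sa sc ac).
  by rewrite refl_row Hz1 e1 scale1r.
apply: (cartan1_false sc sa); first by rewrite eq_sym.
by rewrite refl_row Hz2 e2 scale1r.
Qed.

Lemma sum_split a L : \sum_(c <- L) c =
  (count (pred1 a) L)%:R *: a + \sum_(c <- filter (predC1 a) L) c.
Proof.
elim: L => [|c L IH] /=; first by rewrite !big_nil scale0r addr0.
rewrite big_cons IH; case: eqP => [->|_] /=.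
  by rewrite add1n mulrS scalerDl scale1r addrA.
by rewrite add0n big_cons addrCA.
Qed.

Lemma sum_rho_ge0 L : sword L -> 0 <= dotv (\sum_(c <- L) c) rho.
Proof.
move=> SL; rewrite dotv_sum big_seq; apply: sumr_ge0 => c /SL [[_ H] _].
exact: ltW.
Qed.

Lemma sum_rho_gt0 L : sword L -> L != [::] -> 0 < dotv (\sum_(c <- L) c) rho.
Proof.
case: L => [|c L] // /simple_word_cons [[[_ pc] _] SL] _.
by rewrite big_cons dotvDl ltr_wpDr // sum_rho_ge0.
Qed.

Lemma sum_dot_le0 a L : simple a -> sword L -> a \notin L ->
  dotv (\sum_(c <- L) c) a <= 0.
Proof.
move=> sa SL aL; rewrite dotv_sum big_seq; apply: sumr_le0 => c cL.
apply: (simple_dot (SL c cL) sa).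
by apply: contraNneq aL => <-.
Qed.

Lemma filter_sword a L : sword L -> sword (filter (predC1 a) L).
Proof. by move=> SL c; rewrite mem_filter => /andP[_ /SL]. Qed.

Lemma filter_notin a L : a \notin filter (predC1 a) L.
Proof. by rewrite mem_filter /= eqxx. Qed.

Lemma lemmaB a b : simple a -> pos b -> b != a -> pos (b *m refl a).
Proof.
move=> sa pb ba.
have aP := simple_in sa; have bP := proj1 pb.
have bsP : b *m refl a \in Phi by exact: root_refl.
case: (root_sign bsP) => // H; exfalso.
have [L1 [S1 [N1 E1]]] := pos_sum pb.
have [L2 [S2 [_ E2]]] := pos_sum H.
set k := 2 * dotv b a / dotv a a.
have E2' : - (b *m refl a) = k *: a - b by rewrite refl_row opprB.
rewrite E2' (sum_split a) in E2; rewrite (sum_split a) in E1.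
set m1 := (count (pred1 a) L1)%:R in E1.
set m2 := (count (pred1 a) L2)%:R in E2.
set F1 := filter (predC1 a) L1 in E1; set F2 := filter (predC1 a) L2 in E2.
set t := k - m1 - m2.
have H12 : m1 *: a + \sum_(c <- F1) c + (m2 *: a + \sum_(c <- F2) c) = k *: a.
  by rewrite -E1 -E2 addrC subrK.
have EN : \sum_(c <- F1) c + \sum_(c <- F2) c = t *: a.
  apply/eqP; rewrite /t !scalerBl -addrA -opprD eq_sym subr_eq eq_sym addrC addrACA H12.
  done.
have aa0 := dotv_pos aP.
have t0 : t <= 0.
  have : dotv (t *: a) a <= 0.
    rewrite -EN dotvDl.
    have h1 := sum_dot_le0 sa (filter_sword (a:=a) S1) (@filter_notin a L1).
    have h2 := sum_dot_le0 sa (filter_sword (a:=a) S2) (@filter_notin a L2).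
    rewrite -/F1 in h1; rewrite -/F2 in h2; lra.
  rewrite dotvZl => h; nra.
have F1nil : F1 = [::].
  case E: F1 => [//|c F]; exfalso.
  have h1 : 0 < dotv (\sum_(c <- F1) c) rho.
    by apply: sum_rho_gt0; [apply: filter_sword | rewrite E].
  have h2 : 0 <= dotv (\sum_(c <- F2) c) rho by apply: sum_rho_ge0; apply: filter_sword.
  have h3 : dotv (t *: a) rho <= 0 by rewrite dotvZl; case: sa => [[_ ?] _]; nra.
  by move: h3; rewrite -EN dotvDl; lra.
rewrite F1nil big_nil addr0 in E1.
have : m1 *: a \in Phi by rewrite -E1.
case: hPhi => _ _ _ /(_ a m1 aP) Hred /Hred [] e.
  by move: ba; rewrite E1 e scale1r eqxx.
by move: (ler0n R (count_mem a L1)); rewrite -/m1 e; lra.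
Qed.

Lemma pos_conj b : pos b -> exists ws a, sword ws /\ simple a /\ b = a *m wordval ws.
Proof.
have [k Hk] : exists k, (below_cnt b < k)%N by exists (below_cnt b).+1.
elim: k b Hk => // k IH b Hk pb.
have [sb|ns] := classic (simple b).
  by exists [::], b; rewrite /= mulmx1.
have [L [SL [_ Eb]]] := pos_sum pb.
have bb0 := dotv_pos (proj1 pb).
have [c cL cb] : exists2 c, c \in L & 0 < dotv c b.
  apply: NNPP => H; suff : dotv b b <= 0 by rewrite leNgt bb0.
  rewrite {1}Eb dotv_sum big_seq; apply: sumr_le0 => c cL.
  by rewrite leNgt; apply/negP => h; apply: H; exists c.
have sc := SL c cL.
have bc : b != c by apply: contra_notN ns => /eqP->.
have pb' := lemmaB sc pb bc.
have cc0 := dotv_pos (simple_in sc).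
have lt' : dotv (b *m refl c) rho < dotv b rho.
  rewrite refl_row dotvBl dotvZl gtrBl; apply: mulr_gt0; last by case: sc => [[]].
  by rewrite divr_gt0 // mulr_gt0 // dotvC.
have [ws [a [Sw [sa Ea]]]] := IH _ (leq_trans (below_cnt_lt (proj1 pb') lt') Hk) pb'.
exists (ws ++ [:: c]), a; split; first by apply: simple_word_cat => //; apply/simple_word_cons.
split => //; rewrite wordval_cat /= mulmx1 mulmxA -Ea -mulmxA refl_root_invol ?mulmx1 //.
exact: simple_in.
Qed.

Lemma inW_refl b : b \in Phi -> inW Phi rho (refl b).
Proof.
have H : forall b, pos b -> inW Phi rho (refl b).
  move=> {}b pb; have [ws [a [Sw [sa ->]]]] := pos_conj pb.
  have og := word_orth Sw.
  rewrite refl_conj //; apply: inWM; last by exists ws.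
  apply: inWM; first by apply: inWT; exists ws.
  exact: inW_simple.
move=> bP; case: (root_sign bP) => [/H//|/H]; by rewrite reflN.
Qed.

Lemma omit1_cons i a ws : (0 < i)%N -> omit1 i.+1 (a :: ws) = a :: omit1 i ws.
Proof. by case: i. Qed.

Lemma size_omit1 i ws : (0 < i <= size ws)%N -> size (omit1 i ws) = (size ws).-1.
Proof.
move=> /andP[i0 iw]; rewrite /omit1 size_cat size_take size_drop.
case: ltnP => h; lia.
Qed.

Lemma omit1_subseq i ws : subseq (omit1 i ws) ws.
Proof.
case: i => [|i]; first by rewrite /omit1 /= take0 drop0 subseq_refl.
rewrite /omit1 /= -[X in subseq _ X](cat_take_drop i ws) cat_subseq //.
have -> : drop i.+1 ws = drop 1 (drop i ws) by rewrite drop_drop.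
exact: drop_subseq.
Qed.

Lemma exchange ws b : sword ws -> pos b -> dotv (b *m wordval ws) rho < 0 ->
  exists i, (0 < i <= size ws)%N /\ refl b *m wordval ws = wordval (omit1 i ws).
Proof.
elim: ws b => [|a ws IH] b /=.
  by move=> _ [_ pb]; rewrite mulmx1 ltNge (ltW pb).
move=> /simple_word_cons [sa Sw] pb neg.
have aP := simple_in sa.
have [/eqP ba|ba] := boolP (b == a).
  exists 1%N; split => //; rewrite ba mulmxA refl_root_invol // mul1mx.
  by rewrite /omit1 /= drop0.
have pb' := lemmaB sa pb ba.
move: neg; rewrite mulmxA => neg; have [i [iw Ei]] := IH _ Sw pb' neg.
exists i.+1; split; first by move: iw; rewrite /=; lia.
rewrite omit1_cons; last by case/andP: iw.
rewrite /= -Ei refl_conj; last exact: orth_refl (root_neq0 aP).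
rewrite refl_tr !mulmxA.
by rewrite refl_root_invol // mul1mx.
Qed.

Definition len g : nat := epsilon (inhabits 0%N) (length_is Phi rho g).

Lemma length_ex g : inW Phi rho g -> exists k, length_is Phi rho g k.
Proof.
move=> [ws [Sw Ew]].
have [k [[ws' [S' [E' Z']]] Hm]] :=
  min_ex (P := fun k => exists ws, sword ws /\ wordval ws = g /\ size ws = k)
    (ex_intro _ (size ws) (ex_intro _ ws (conj Sw (conj Ew erefl)))).
exists k; split; first by exists ws'.
by move=> w2 S2 E2; apply: Hm; exists w2.
Qed.

Lemma lenP g : inW Phi rho g -> length_is Phi rho g (len g).
Proof. by move=> /length_ex H; apply: epsilon_spec. Qed.

Lemma length_is_len g k : length_is Phi rho g k -> k = len g.
Proof.
move=> Hk; have gW : inW Phi rho g by case: Hk => [[ws [Sw [Ew _]]] _]; exists ws.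
have [[w1 [S1 [E1 Z1]]] M1] := Hk; have [[w2 [S2 [E2 Z2]]] M2] := lenP gW.
apply/eqP; rewrite eqn_leq; apply/andP; split.
  by rewrite -Z2; apply: M1.
by rewrite -Z1; apply: M2.
Qed.

Lemma len_le ws : sword ws -> (len (wordval ws) <= size ws)%N.
Proof.
move=> Sw; have [_ M] := lenP (ex_intro _ ws (conj Sw erefl)); exact: M.
Qed.

Lemma len_word g : inW Phi rho g -> exists ws, sword ws /\ wordval ws = g /\ size ws = len g.
Proof. by move=> /lenP [H _]. Qed.

Lemma inW_word ws : sword ws -> inW Phi rho (wordval ws).
Proof. by move=> Sw; exists ws. Qed.

Lemma len_simple_le a g : simple a -> inW Phi rho g -> (len (refl a *m g) <= (len g).+1)%N.
Proof.
move=> sa gW; have [ws [Sw [<- Z]]] := len_word gW.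
rewrite -Z -wordval_cons; apply: (len_le (ws := a :: ws)).
by apply/simple_word_cons.
Qed.

Lemma len_dec b g : pos b -> inW Phi rho g -> dotv (b *m g) rho < 0 ->
  (len (refl b *m g) < len g)%N.
Proof.
move=> pb gW neg; have [ws [Sw [Ew Z]]] := len_word gW; subst g.
have [i [iw Ei]] := exchange Sw pb neg.
rewrite Ei; apply: leq_ltn_trans (len_le _) _.
  exact: simple_word_sub (omit1_subseq _ _) Sw.
rewrite size_omit1 // -Z; case/andP: iw => i0 iw; lia.
Qed.

Lemma reflK b g : b \in Phi -> refl b *m (refl b *m g) = g.
Proof. by move=> bP; rewrite mulmxA refl_root_invol // mul1mx. Qed.

Lemma len_inc b g : pos b -> inW Phi rho g -> 0 < dotv (b *m g) rho ->
  (len g < len (refl b *m g))%N.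
Proof.
move=> pb gW p; have bP := proj1 pb.
have hW : inW Phi rho (refl b *m g) by apply: inWM => //; apply: inW_refl.
have := len_dec pb hW; rewrite reflK //; apply.
by rewrite mulmxA refl_self ?root_neq0 // mulNmx dotvNl oppr_lt0.
Qed.

Lemma len_simple a g : simple a -> inW Phi rho g ->
  ((len (refl a *m g) = (len g).+1) /\ 0 < dotv (a *m g) rho) \/
  ((len g = (len (refl a *m g)).+1) /\ dotv (a *m g) rho < 0).
Proof.
move=> sa gW; have aP := simple_in sa; have pa := simple_pos sa.
have agP : a *m g \in Phi by apply: inW_root.
have := root_rho agP; rewrite neq_lt => /orP[neg|ps].
  right; split => //; apply/eqP; rewrite eqn_leq len_dec // andbT.
  have := len_simple_le sa (inWM (inW_simple sa) gW); rewrite reflK //.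
left; split => //; apply/eqP; rewrite eqn_leq len_simple_le //.
exact: len_inc.
Qed.


Notation le := (bruhat_le Phi rho).
Notation step := (bruhat_step Phi rho).

Lemma length_inW g k : length_is Phi rho g k -> inW Phi rho g.
Proof. by case=> [[ws [Sw [Ew _]]] _]; exists ws. Qed.

Lemma step_inv x y : step x y ->
  [/\ inW Phi rho x, inW Phi rho y, (len x < len y)%N & exists2 a, a \in Phi & y = x *m refl a].
Proof.
move=> [a [aP [-> [kx [ky [Hx [Hy lt]]]]]]].
split; [exact: length_inW Hx|exact: length_inW Hy| |by exists a].
by rewrite -(length_is_len Hx) -(length_is_len Hy).
Qed.

Lemma mk_step_r x b : inW Phi rho x -> b \in Phi -> (len x < len (x *m refl b))%N ->
  step x (x *m refl b).
Proof.
move=> xW bP lt; exists b; split => //; split => //.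
exists (len x), (len (x *m refl b)); split; first exact: lenP.
split => //; apply: lenP; apply: inWM => //; exact: inW_refl.
Qed.

Lemma left_right x b : inW Phi rho x -> refl b *m x = x *m refl (b *m x).
Proof.
move=> xW; have [o1 o2] := inW_orth xW.
by rewrite refl_conj ?inW_orth // !mulmxA o1 mul1mx.
Qed.

Lemma mk_step_l x b : inW Phi rho x -> b \in Phi -> (len x < len (refl b *m x))%N ->
  step x (refl b *m x).
Proof.
move=> xW bP; rewrite left_right // => lt; apply: mk_step_r => //.
exact: inW_root.
Qed.

Lemma step_left x y : step x y -> exists b, pos b /\ y = refl b *m x.
Proof.
move=> /step_inv [xW yW _ [a aP ->]].
have xTW := inWT xW.
have cP : a *m x^T \in Phi by exact: inW_root.
have E : refl (a *m x^T) *m x = x *m refl a.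
  rewrite refl_conj; last exact: inW_orth.
  rewrite trmxK -!mulmxA.
  by have [_ ->] := inW_orth xW; rewrite mulmx1.
case: (root_sign cP) => pc; [exists (a *m x^T)|exists (- (a *m x^T))];
  by rewrite ?reflN E.
Qed.

Lemma le_refl x : inW Phi rho x -> le x x.
Proof. by move=> xW; split => //; apply: rt_refl. Qed.

Lemma le_trans x y z : le x y -> le y z -> le x z.
Proof. by move=> [xW xy] [_ yz]; split => //; apply: rt_trans yz. Qed.

Lemma step_le x y : step x y -> le x y.
Proof. by move=> st; split; [case: (step_inv st)|apply: rt_step]. Qed.

Lemma le_inW x y : le x y -> inW Phi rho x /\ inW Phi rho y.
Proof.
move=> [xW H]; have xy := clos_rt_rt1n _ _ _ _ H; clear H; split => //.
by elim: xy xW => // {}x {}y z st _ IH _; apply: IH; case: (step_inv st).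
Qed.

Lemma le_len x y : le x y -> x = y \/ (len x < len y)%N.
Proof.
move=> [_ H]; have xy := clos_rt_rt1n _ _ _ _ H; clear H; elim: xy => [|{}x {}y z st _ IH]; first by left.
right; have [_ _ lt _] := step_inv st.
by case: IH => [<-|lt2] //; apply: ltn_trans lt2.
Qed.

Lemma lt_len x y : bruhat_lt Phi rho x y -> (len x < len y)%N.
Proof. by move=> [/le_len [] // ->]. Qed.

Lemma step_down a y : simple a -> inW Phi rho y -> (len (refl a *m y) < len y)%N ->
  le (refl a *m y) y.
Proof.
move=> sa yW lt; have aP := simple_in sa.
apply: step_le; rewrite -{2}(reflK y aP); apply: mk_step_l => //.
  by apply: inWM => //; exact: inW_simple.
by rewrite reflK.
Qed.

Lemma step_up a y : simple a -> inW Phi rho y -> (len y < len (refl a *m y))%N ->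
  le y (refl a *m y).
Proof.
by move=> sa yW lt; apply: step_le; apply: mk_step_l => //; exact: simple_in.
Qed.

Lemma len_pos_of b g : pos b -> inW Phi rho g -> (len g < len (refl b *m g))%N ->
  0 < dotv (b *m g) rho.
Proof.
move=> pb gW lt; have bgP : b *m g \in Phi by apply: inW_root => //; case: pb.
have := root_rho bgP; rewrite neq_lt => /orP[neg|//].
by have := len_dec pb gW neg; rewrite ltnNge (ltnW lt).
Qed.

Lemma propP_step y z a : step y z -> simple a ->
  le (refl a *m y) z \/ le (refl a *m y) (refl a *m z).
Proof.
move=> st sa; have aP := simple_in sa.
have [yW zW lt _] := step_inv st; have [b [pb Ez]] := step_left st.
have bP := proj1 pb.
have syW : inW Phi rho (refl a *m y) by apply: inWM => //; exact: inW_simple.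
case: (len_simple sa yW) => [[E1 p1]|[E1 n1]]; last first.
  by left; apply: le_trans (step_down sa yW _) (step_le st); rewrite E1.
have [/eqP ba|ba] := boolP (b == a).
  by left; rewrite -ba -Ez; apply: le_refl.
right; apply: step_le.
have pb' := lemmaB sa pb ba.
have E : refl a *m z = refl (b *m refl a) *m (refl a *m y).
  rewrite Ez refl_conj; last exact: orth_refl (root_neq0 aP).
  rewrite refl_tr !mulmxA.
  by rewrite -(mulmxA _ (refl a) (refl a)) refl_root_invol // mulmx1.
rewrite E; apply: mk_step_l => //; first by case: pb'.
apply: len_inc => //; rewrite mulmxA -(mulmxA b) refl_root_invol // mulmx1.
by apply: len_pos_of => //; rewrite -Ez.
Qed.

Lemma propP y z a : le y z -> simple a ->
  le (refl a *m y) z \/ le (refl a *m y) (refl a *m z).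
Proof.
move=> [yW H] sa; have yz := clos_rt_rt1n _ _ _ _ H; clear H; have aP := simple_in sa.
elim: yz yW => [{}y|{}y y1 {}z st r IH] yW.
  have syW : inW Phi rho (refl a *m y) by apply: inWM => //; exact: inW_simple.
  case: (len_simple sa yW) => [[E1 _]|[E1 _]].
    by right; apply: le_refl.
  by left; apply: step_down => //; rewrite E1.
have [_ y1W _ _] := step_inv st.
have y1z : le y1 z by split => //; apply: clos_rt1n_rt.
case: (propP_step st sa) => H; first by left; apply: le_trans H y1z.
case: (IH y1W) => H2; [left|right]; exact: le_trans H H2.
Qed.

Lemma le_up y z a : le y z -> simple a -> (len z < len (refl a *m z))%N ->
  le (refl a *m y) (refl a *m z).
Proof.
move=> yz sa lt; have [_ zW] := le_inW yz.
case: (propP yz sa) => // H; apply: le_trans H _; exact: step_up.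
Qed.

Lemma reduced_tail a ws : sword (a :: ws) ->
  size (a :: ws) = len (wordval (a :: ws)) ->
  size ws = len (wordval ws) /\ (len (wordval ws) < len (wordval (a :: ws)))%N.
Proof.
move=> /simple_word_cons [sa Sw] Z.
have := len_le Sw; have := len_simple_le sa (inW_word Sw).
rewrite -wordval_cons -Z /= => h1 h2; split; first lia.
by rewrite ltnS.
Qed.

Lemma subword_le ws us : sword ws -> size ws = len (wordval ws) -> subseq us ws ->
  le (wordval us) (wordval ws).
Proof.
elim: ws us => [|a ws IH] us Sw Z.
  by rewrite subseq0 => /eqP->; apply: le_refl; exact: inW1.
move: (Sw) => /simple_word_cons [sa Sw'].
have [Z' lt] := reduced_tail Sw Z.
have wW := inW_word Sw'.
have up : le (wordval ws) (wordval (a :: ws)) by apply: step_up.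
case: us => [|c us] /=.
  move=> _; apply: le_trans up; apply: (IH [::]) => //; exact: sub0seq.
case: eqP => [-> su|_ su].
  by apply: le_up => //; apply: IH.
by apply: le_trans up; apply: (IH (c :: us)).
Qed.

Lemma reduced_sub ws : sword ws ->
  exists us, [/\ subseq us ws, wordval us = wordval ws & size us = len (wordval us)].
Proof.
elim: ws => [|a ws IH] Sw.
  exists [::]; split => //; apply/eqP; rewrite eq_sym -leqn0.
  exact: (len_le (ws := [::])).
move: (Sw) => /simple_word_cons [sa Sw'].
have [us [su Eu Zu]] := IH Sw'.
have Su : sword us := simple_word_sub su Sw'.
have gW := inW_word Sw'.
case: (len_simple sa gW) => [[E1 _]|[E1 neg]].
  exists (a :: us); split; first by rewrite /= eqxx.
    by rewrite !wordval_cons Eu.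
  by rewrite wordval_cons Eu E1 /= Zu Eu.
rewrite -Eu in neg; have [i [iw Ei]] := exchange Su (simple_pos sa) neg.
exists (omit1 i us); split.
- apply: subseq_trans (omit1_subseq _ _) _; apply: subseq_trans su _.
  exact: subseq_cons.
- by rewrite -Ei Eu.
rewrite -Ei Eu size_omit1 // Zu Eu E1.
done.
Qed.

Lemma le_subword x w : le x w -> forall ws, sword ws -> wordval ws = w ->
  size ws = len w -> exists2 us, subseq us ws & wordval us = x.
Proof.
move=> [xW H]; have xw := clos_rt_rtn1 _ _ _ _ H; clear H.
elim: xw => [|y z st r IH] ws Sw Ew Z; first by exists ws.
have [yW zW lt _] := step_inv st; have [b [pb Ez]] := step_left st.
have bP := proj1 pb.
have Ey : y = refl b *m z by rewrite Ez reflK.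
have neg : dotv (b *m wordval ws) rho < 0.
  have bzP : b *m z \in Phi by exact: inW_root.
  have := root_rho bzP; rewrite neq_lt Ew => /orP[//|ps].
  by have := len_inc pb zW ps; rewrite -Ey ltnNge (ltnW lt).
have [i [iw Ei]] := exchange Sw pb neg.
have So : sword (omit1 i ws) := simple_word_sub (omit1_subseq _ _) Sw.
have [us1 [su1 Eu1 Zu1]] := reduced_sub So.
have Eus1 : wordval us1 = y by rewrite Eu1 -Ei Ew -Ey.
have Zus1 : size us1 = len y by rewrite Zu1 Eus1.
have [us su Eu] := IH us1 (simple_word_sub su1 So) Eus1 Zus1.
exists us => //; apply: subseq_trans su _; apply: subseq_trans su1 _.
exact: omit1_subseq.
Qed.

Lemma subseq_cons_inv (us : seq 'rV[R]_n) a ws : subseq us (a :: ws) ->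
  subseq us ws \/ exists2 us', us = a :: us' & subseq us' ws.
Proof.
case: us => [|c us] /=; first by left; exact: sub0seq.
by case: eqP => [-> su|_ su]; [right; exists us|left].
Qed.

Lemma red_word_first a w : simple a -> inW Phi rho w -> (len (refl a *m w) < len w)%N ->
  exists ws, [/\ sword ws, refl a *m wordval ws = w, size ws = len (refl a *m w)
   & size (a :: ws) = len w].
Proof.
move=> sa wW lt; have aP := simple_in sa.
have swW : inW Phi rho (refl a *m w) by apply: inWM => //; exact: inW_simple.
have [ws [Sw [Ew Z]]] := len_word swW.
exists ws; split => //; first by rewrite Ew reflK.
case: (len_simple sa wW) => [[E1 _]|[E1 _]]; first by move: lt; rewrite E1; lia.
by rewrite /= Z E1.
Qed.

Lemma propZ x w a : le x w -> simple a -> (len (refl a *m x) < len x)%N ->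
  (len (refl a *m w) < len w)%N -> le (refl a *m x) (refl a *m w).
Proof.
move=> xw sa ltx ltw; have aP := simple_in sa; have [xW wW] := le_inW xw.
have [ws [Sw Ew Zw Zaw]] := red_word_first sa wW ltw.
have Saw : sword (a :: ws) by apply/simple_word_cons.
have [us su Eu] := le_subword xw Saw Ew Zaw.
have Zws : size ws = len (wordval ws) by rewrite Zw -Ew reflK.
case: (subseq_cons_inv su) => [su'|[us' Eu' su']].
  rewrite -Ew reflK //; apply: (le_trans (step_down sa xW ltx)).
  by rewrite -Eu; apply: subword_le.
by rewrite -Eu Eu' -Ew !wordval_cons !reflK //; apply: subword_le.
Qed.

Lemma propL x w a : le x w -> simple a -> (len x < len (refl a *m x))%N ->
  (len (refl a *m w) < len w)%N -> le x (refl a *m w).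
Proof.
move=> xw sa ltx ltw; have aP := simple_in sa; have [xW wW] := le_inW xw.
have [ws [Sw Ew Zw Zaw]] := red_word_first sa wW ltw.
have Saw : sword (a :: ws) by apply/simple_word_cons.
have [us su Eu] := le_subword xw Saw Ew Zaw.
have Zws : size ws = len (wordval ws) by rewrite Zw -Ew reflK.
case: (subseq_cons_inv su) => [su'|[us' Eu' su']].
  by rewrite -Ew reflK //; subst x; apply: subword_le.
apply: le_trans (step_up sa xW ltx) _.
by subst x; rewrite Eu' -Ew !wordval_cons !reflK //; apply: subword_le.
Qed.

Lemma propL2 x w a : le x w -> simple a -> (len x < len (refl a *m x))%N ->
  (len (refl a *m w) < len w)%N -> le (refl a *m x) w.
Proof.
move=> xw sa ltx ltw; have aP := simple_in sa; have [xW wW] := le_inW xw.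
have H := propL xw sa ltx ltw.
rewrite -(reflK w aP); apply: le_up => //; rewrite reflK //.
Qed.

Lemma propZ' x w a : le (refl a *m x) (refl a *m w) -> simple a ->
  (len (refl a *m x) < len x)%N -> (len (refl a *m w) < len w)%N -> le x w.
Proof.
move=> H sa ltx ltw; have aP := simple_in sa; have [_ swW] := le_inW H.
have wW : inW Phi rho w by rewrite -(reflK w aP); apply: inWM => //; exact: inW_simple.
case: (propP H sa); rewrite !reflK // => H2.
by apply: le_trans H2 _; rewrite -{2}(reflK w aP); apply: step_up; rewrite ?reflK.
Qed.

Lemma lt_of_len y z b : inW Phi rho y -> b \in Phi -> z = y *m refl b ->
  (len y < len z)%N -> bruhat_lt Phi rho y z.
Proof.
move=> yW bP -> lt; split; first by apply: step_le; apply: mk_step_r.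
by move=> E; move: lt; rewrite -E ltnn.
Qed.

Lemma l_ge2 (l : seq nat) : sorted ltn l -> (1 < head 0 l)%N -> forall j, j \in l -> (2 <= j)%N.
Proof.
case: l => [|h t] //= srt h2 j; rewrite inE => /orP[/eqP->//|jt].
have := order_path_min ltn_trans srt => /allP /(_ j jt) hj.
exact: leq_trans h2 (ltnW hj).
Qed.

Lemma mem_map_pred (l : seq nat) i : (i.+1 \in [seq k.-1 | k <- l]) = (i.+2 \in l).
Proof.
apply/mapP/idP => [[[|j] jl /= e]|il]; last by exists i.+2.
  by [].
by rewrite e.
Qed.

Lemma main x a ws' l :
  bruhat_lt Phi rho x (wordval (a :: ws')) ->
  reduced_word Phi rho (a :: ws') ->
  good_word Phi rho x (a :: ws') ->
  is_lambda Phi rho x (a :: ws') l ->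
  (1 < head 0 l)%N ->
  [/\ ~ bruhat_le Phi rho x (refl a *m wordval (a :: ws')),
      (forall b, Sxw Phi rho (refl a *m x) (refl a *m wordval (a :: ws')) b
                 <-> Sxw Phi rho x (wordval (a :: ws')) b),
      reduced_word Phi rho ws',
      good_word Phi rho (refl a *m x) ws' &
      is_lambda Phi rho (refl a *m x) ws' [seq i.-1 | i <- l]].
Proof.
move=> [xw _] [Sw Mw] [l0 [[srt0 Hl0] Ex0]] [srt Hl] h1.
move: (Sw) => /simple_word_cons [sa Sw'].
have aP := simple_in sa.
set w := wordval (a :: ws').
set W' := wordval ws'.
have Ew : w = refl a *m W' by [].
have [xW wW] := le_inW xw.
have W'W : inW Phi rho W' := inW_word Sw'.
have Zw : size (a :: ws') = len w.
  have [ws0 [S0 [E0 Z0]]] := len_word wW.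
  apply/eqP; rewrite eqn_leq; apply/andP; split; last exact: len_le.
  by rewrite -Z0; apply: Mw.
have [Zw' ltw] := reduced_tail Sw Zw.
have sw : refl a *m w = W' by rewrite Ew reflK.
have ltsw : (len (refl a *m w) < len w)%N by rewrite sw.
have ge2 := l_ge2 srt h1.
have notxW' : ~ le x W'.
  move=> H; have : 1%N \in l by apply/Hl; split => //; rewrite /omit1 /= drop0.
  by move/ge2.
have ltx : (len (refl a *m x) < len x)%N.
  case: (len_simple sa xW) => [[E1 _]|[E1 _]]; last by rewrite E1.
  by case: notxW'; rewrite -sw; apply: propL => //; rewrite E1.
have sxW : inW Phi rho (refl a *m x) by apply: inWM => //; exact: inW_simple.
have KE : forall i, (1 <= i <= size ws')%N ->
    le x (refl a *m wordval (omit1 i ws')) <-> le (refl a *m x) (wordval (omit1 i ws')).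
  move=> i iw; set v := wordval (omit1 i ws').
  have Sv : sword (omit1 i ws') := simple_word_sub (omit1_subseq _ _) Sw'.
  have vW : inW Phi rho v := inW_word Sv.
  have vW' : le v W' by apply: subword_le => //; exact: omit1_subseq.
  case: (len_simple sa vW) => [[E1 _]|[E1 _]].
    split => H.
      by rewrite -(reflK v aP); apply: propZ => //; rewrite reflK // E1.
    apply: (propZ' (a := a)) => //; rewrite ?reflK // E1 //.
  split => H.
    apply: le_trans (step_down sa xW ltx) _; apply: le_trans H _.
    by apply: step_down => //; rewrite E1.
  case: notxW'; apply: le_trans vW'.
  have H2 := propL2 H sa; rewrite (reflK x aP) in H2; apply: H2 => //.
  by rewrite E1.
have Hl' : forall i, i \in [seq k.-1 | k <- l] <->
    (1 <= i <= size ws')%N /\ le (refl a *m x) (wordval (omit1 i ws')).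
  move=> i; split.
    move=> /mapP [j jl ->]; have j2 := ge2 _ jl.
    have [jb Hj] := (Hl j).1 jl.
    case: j j2 jl jb Hj => [|[|j]] // _ _ jb Hj.
    have jb' : (1 <= j.+1 <= size ws')%N by move: jb => /=; lia.
    split => //; apply/(KE _ jb').
    by move: Hj; rewrite omit1_cons.
  move=> [ib Hi]; case: i ib Hi => [|i] // ib Hi.
  rewrite mem_map_pred; apply/Hl; split; first by move: ib => /=; lia.
  by rewrite omit1_cons // wordval_cons; apply/KE.
have srt' : sorted ltn [seq k.-1 | k <- l].
  rewrite sorted_map; apply: (sub_in_sorted (P := fun k => 2 <= k)%N) srt.
    by move=> p q /= p2 q2 pq; rewrite -ltnS prednK ?(leq_trans _ p2) //; lia.
  by apply/allP => j /ge2.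
have El0 : l0 = l.
  apply: (irr_sorted_eq ltn_trans ltnn srt0 srt) => i.
  apply/idP/idP => /[dup] H; [move/Hl0 => /Hl | move/Hl => /Hl0] => //.
have Ex : refl a *m x = wordval (omit_pos [seq k.-1 | k <- l] ws').
  rewrite Ex0 El0 /omit_pos /=.
  have -> : (1 \notin l) = true by apply/negP => /ge2.
  have -> : iota 1 (size ws') = map S (iota 0 (size ws')) by exact: (iotaDl 1 0 _).
  rewrite -map_comp wordval_cons reflK //; congr (wordval (mask _ _)).
  by apply: eq_map => i /=; rewrite mem_map_pred.
split.
- by rewrite sw.
- move=> b; rewrite /Sxw sw; split.
    move=> [pb [H1 H2]]; split => //.
    have bP := proj1 pb.
    set y := W' *m refl b in H1 H2.
    have yW := proj2 (le_inW H1).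
    have lty := lt_len H2.
    have Eu : w *m refl b = refl a *m y by rewrite /y mulmxA -sw reflK.
    rewrite Eu.
    case: (len_simple sa yW) => [[E1 _]|[E1 _]].
      split.
        apply: (propZ' (a := a)); rewrite ?reflK //; last by rewrite E1.
      apply: (lt_of_len (b := b)) => //.
        by apply: inWM => //; exact: inW_simple.
        by rewrite -Eu -mulmxA refl_root_invol // mulmx1.
      by rewrite E1; move: ltsw; rewrite sw; lia.
    case: notxW'; apply: le_trans (proj1 H2).
    have H3 := propL2 H1 sa; rewrite (reflK x aP) in H3; apply: H3 => //.
    by rewrite E1.
  move=> [pb [H1 H2]]; split => //.
  have bP := proj1 pb.
  set us := w *m refl b in H1 H2.
  have uW := proj2 (le_inW H1).
  have ltu := lt_len H2.
  have Ey : W' *m refl b = refl a *m us by rewrite /us -sw mulmxA.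
  rewrite Ey.
  case: (len_simple sa uW) => [[E1 _]|[E1 _]].
    case: notxW'; apply: le_trans H1 _; rewrite -sw.
    by apply: propL => //; [exact: (proj1 H2)|rewrite E1].
  split; first by apply: propZ => //; rewrite E1.
  apply: (lt_of_len (b := b)) => //.
    by apply: inWM => //; exact: inW_simple.
    by rewrite -Ey -mulmxA refl_root_invol // mulmx1.
  by move: Zw Zw' ltu; rewrite -/W' E1 /=; lia.
- split => // ws2 S2 E2; rewrite Zw'; rewrite -E2; exact: len_le.
- by exists [seq k.-1 | k <- l]; split => //; split.
- by split.
Qed.

End Main.

Theorem lemma5p1 (R : realFieldType) (n : nat) (Phi : seq 'rV[R]_n) (rho : 'rV[R]_n)
  (hPhi : is_root_system Phi) (hrho : regular Phi rho)
  (x : 'M[R]_n) (a : 'rV[R]_n) (ws' : seq 'rV[R]_n) (l : seq nat) :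
  bruhat_lt Phi rho x (wordval (a :: ws')) ->
  reduced_word Phi rho (a :: ws') ->
  good_word Phi rho x (a :: ws') ->
  is_lambda Phi rho x (a :: ws') l ->
  (1 < head 0 l)%N ->
  [/\ ~ bruhat_le Phi rho x (refl a *m wordval (a :: ws')),
      (forall b, Sxw Phi rho (refl a *m x) (refl a *m wordval (a :: ws')) b
                 <-> Sxw Phi rho x (wordval (a :: ws')) b),
      reduced_word Phi rho ws',
      good_word Phi rho (refl a *m x) ws' &
      is_lambda Phi rho (refl a *m x) ws' [seq i.-1 | i <- l]].
Proof.
by move=> H1 H2 H3 H4 H5; apply: (main hPhi hrho H1 H2 H3 H4 H5).
Qed.
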